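(* For all $z\in\mathbb{C}\setminus\big((-\infty,-1]\cup[1,\infty)\big)$, $$z(1+z)\gamma(z)+z(1-z)\gamma(-z)=2z^3\gamma(z^2)-2z\log 2+(1+z)\log(1+z)-(1-z)\log(1-z).$$
   Context: $\gamma(z)$ is the generalized-Euler-constant function: for $|z|\le1$, $\gamma(z)=\sum_{n=1}^{\infty} z^{n-1}\left(\frac{1}{n}-\log\frac{n+1}{n}\right)$, and for $z\in\mathbb{C}\setminus[1,\infty)$ it denotes the analytic continuation $\gamma(z)=\int_0^1\frac{1-x+\log x}{(1-xz)\log x}\,dx$. $\log$ is the principal branch. *)

(* Defs.v *)
From Stdlib Require Import Reals.
From Coquelicot Require Import Coquelicot.
Open Scope R_scope.

(* Principal argument of a complex number, with values in (-PI, PI]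
   (Carg 0 = 0, irrelevant). *)
Definition Carg (z : C) : R :=
  let x := Re z in let y := Im z in
  if Rlt_dec 0 x then atan (y / x)
  else if Rlt_dec x 0 then
    (if Rle_dec 0 y then atan (y / x) + PI else atan (y / x) - PI)
  else (if Rlt_dec 0 y then PI / 2
        else if Rlt_dec y 0 then - (PI / 2) else 0).

Definition Clog (z : C) : C := (ln (Cmod z), Carg z).

(* Generalized-Euler-constant function, analytic continuation to
   C \ [1, oo):  gamma(z) = int_0^1 (1 - x + log x) / ((1 - x z) log x) dx.
   The integrand has removable singularities at x = 0 and x = 1 (it is bounded),
   so the Riemann integral of the C-valued function on [0,1] is meaningful. *)
Definition gammaE (z : C) : C :=
  @RInt C_R_CompleteNormedModule
    (fun x : R => Cmult (RtoC ((1 - x + ln x) / ln x))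
                        (Cinv (Cminus (RtoC 1) (Cmult (RtoC x) z))))
    0 1.

(* Main.v *)
Require Import Defs.
From Stdlib Require Import Reals Lra.
From Coquelicot Require Import Coquelicot.
Open Scope R_scope.

Lemma ln_ub x : 0 < x -> ln x <= x - 1.
Proof.
intros Hx. destruct (Req_dec (ln x) 0) as [H|H].
- assert (x = 1). { rewrite <- (exp_ln x Hx), H. apply exp_0. } lra.
- generalize (exp_ineq1 _ H). rewrite exp_ln by lra. lra.
Qed.

Lemma ln_lb x : 0 < x -> 1 - / x <= ln x.
Proof.
intros Hx. generalize (ln_ub (/ x) (Rinv_0_lt_compat _ Hx)).
rewrite ln_Rinv by lra. lra.
Qed.

Lemma ln_neg x : 0 < x < 1 -> ln x < 0.
Proof. intros H. rewrite <- ln_1. apply ln_increasing; lra. Qed.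

Lemma ln_pos' x : 1 < x -> 0 < ln x.
Proof. intros H. rewrite <- ln_1. apply ln_increasing; lra. Qed.

Lemma ln_nonpos x : x <= 0 -> ln x = 0.
Proof. intros H. unfold ln. case Rlt_dec; intros; [exfalso; lra|reflexivity]. Qed.

Definition Lc (x : R) : R := if Req_EM_T x 1 then 1 else (x - 1) / ln x.

Lemma Lc_bounds01 x : 0 < x < 1 -> x <= Lc x <= 1.
Proof.
intros Hx. unfold Lc. destruct (Req_EM_T x 1) as [e|n]; [lra|].
assert (hx0 : 0 < x) by lra.
generalize (ln_ub x hx0) (ln_lb x hx0) (ln_neg x Hx). intros h1 h2 h3.
set (l := ln x) in *. set (q := (x - 1) / l).
assert (hq : q * l = x - 1) by (unfold q; field; lra).
assert (h2' : x * l >= x - 1).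
{ assert (x * (1 - / x) = x - 1) by (field; lra). nra. }
split; nra.
Qed.

Lemma Lc_bounds1 x : 1 < x -> 1 <= Lc x <= x.
Proof.
intros Hx. unfold Lc. destruct (Req_EM_T x 1) as [e|n]; [lra|].
assert (hx0 : 0 < x) by lra.
generalize (ln_ub x hx0) (ln_lb x hx0) (ln_pos' x Hx). intros h1 h2 h3.
set (l := ln x) in *. set (q := (x - 1) / l).
assert (hq : q * l = x - 1) by (unfold q; field; lra).
assert (h2' : x * l >= x - 1).
{ assert (x * (1 - / x) = x - 1) by (field; lra). nra. }
split; nra.
Qed.

Lemma cont_invln0 : continuous (fun x => / ln x) 0.
Proof.
apply continuity_pt_filterlim. intros eps Heps.
exists (exp (- / eps)). split; [apply exp_pos|].
intros y [_ Hy]. simpl in *. unfold R_dist in *. rewrite Rminus_0_r in Hy.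
rewrite (ln_nonpos 0) by lra. rewrite Rinv_0, Rminus_0_r.
destruct (Rle_dec y 0) as [hy|hy].
- rewrite ln_nonpos by lra. rewrite Rinv_0, Rabs_R0. lra.
- assert (h: ln y < - / eps).
  { rewrite <- (ln_exp (- / eps)). apply ln_increasing; [lra|].
    apply Rabs_def2 in Hy. lra. }
  assert (0 < / eps) by (apply Rinv_0_lt_compat; lra).
  rewrite Rabs_left by (apply Rinv_lt_0_compat; lra).
  rewrite <- Rinv_opp. rewrite <- (Rinv_inv eps).
  apply Rinv_lt_contravar; nra.
Qed.
Lemma locally_R x d (P : R -> Prop) : 0 < d -> (forall y, Rabs (y - x) < d -> P y) -> locally x P.
Proof. intros Hd H. exists (mkposreal d Hd). intros y Hy. apply H. exact Hy. Qed.

Lemma cont_id' x : continuous (fun y : R => y - 1) x.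
Proof. apply (@ex_derive_continuous R_AbsRing R_NormedModule). auto_derive. auto. Qed.

Lemma Lc_cont x : 0 <= x <= 1 -> continuous Lc x.
Proof.
intros Hx.
destruct (Req_dec x 0) as [e0|n0].
{ subst x. apply (@continuous_ext_loc R_UniformSpace R_UniformSpace) with (g := fun y => mult (y - 1) (/ ln y)).
  - apply locally_R with (d := 1/2); [lra|]. intros y Hy. unfold Lc.
    destruct (Req_EM_T y 1) as [e|n].
    + rewrite Rminus_0_r in Hy. apply Rabs_def2 in Hy. lra.
    + reflexivity.
  - apply (@continuous_mult R_UniformSpace R_AbsRing (fun y => y - 1) (fun y => / ln y)). apply cont_id'. apply cont_invln0. }
destruct (Req_dec x 1) as [e1|n1].
{ subst x. apply continuity_pt_filterlim. intros eps Heps.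
  exists (Rmin eps (1/2)). split. { apply Rmin_pos; lra. }
  intros y [[_ Hne] Hy]. simpl in *. unfold R_dist in *.
  assert (Lc 1 = 1) as ->. { unfold Lc. destruct (Req_EM_T 1 1); [reflexivity|lra]. }
  assert (h1 := Rmin_l eps (1/2)). assert (h2 := Rmin_r eps (1/2)).
  apply Rabs_def2 in Hy.
  destruct (Rlt_dec y 1) as [hlt|hge].
  - assert (h := Lc_bounds01 y ltac:(lra)). apply Rabs_def1; lra.
  - assert (1 < y) by (destruct (Rtotal_order y 1) as [?|[?|?]]; [lra|subst; congruence|lra]).
    assert (h := Lc_bounds1 y ltac:(lra)). apply Rabs_def1; lra. }
apply (@continuous_ext_loc R_UniformSpace R_UniformSpace) with (g := fun y => (y - 1) / ln y).
- apply locally_R with (d := Rmin x (1 - x)). { apply Rmin_pos; lra. }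
  intros y Hy. unfold Lc.
  assert (h1 := Rmin_l x (1 - x)). assert (h2 := Rmin_r x (1 - x)).
  apply Rabs_def2 in Hy.
  destruct (Req_EM_T y 1) as [e|n]; [lra|reflexivity].
- apply (@ex_derive_continuous R_AbsRing R_NormedModule). auto_derive. split; [lra|].
  split; [|auto]. assert (ln x < 0) by (apply ln_neg; lra). lra.
Qed.

Lemma ex_RInt_Lc a b : 0 <= a <= 1 -> 0 <= b <= 1 -> ex_RInt Lc a b.
Proof.
intros Ha Hb. apply (@ex_RInt_continuous R_CompleteNormedModule). intros z Hz. apply Lc_cont.
split.
- apply Rle_trans with (2 := proj1 Hz). apply Rmin_glb; lra.
- apply Rle_trans with (1 := proj2 Hz). apply Rmax_lub; lra.
Qed.

Lemma cont_invln x : 0 <= x < 1 -> continuous (fun y => / ln y) x.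
Proof.
intros Hx. destruct (Req_dec x 0) as [e|n].
- subst. apply cont_invln0.
- apply (@ex_derive_continuous R_AbsRing R_NormedModule). auto_derive. split; [lra|].
  assert (ln x < 0) by (apply ln_neg; lra). lra.
Qed.

Lemma cont_xinvln x : 0 <= x < 1 -> continuous (fun y => y * / ln y) x.
Proof.
intros Hx. apply (@continuous_mult R_UniformSpace R_AbsRing (fun y : R => y) (fun y => / ln y)).
apply continuous_id. apply cont_invln; auto.
Qed.

Lemma ex_RInt_invln a b : 0 <= a < 1 -> 0 <= b < 1 -> ex_RInt (fun y => / ln y) a b.
Proof.
intros Ha Hb. apply (@ex_RInt_continuous R_CompleteNormedModule). intros z Hz. apply cont_invln.
split.
- apply Rle_trans with (2 := proj1 Hz). apply Rmin_glb; lra.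
- apply Rle_lt_trans with (1 := proj2 Hz). apply Rmax_lub_lt; lra.
Qed.

Lemma ex_RInt_xinvln a b : 0 <= a < 1 -> 0 <= b < 1 -> ex_RInt (fun y => y * / ln y) a b.
Proof.
intros Ha Hb. apply (@ex_RInt_continuous R_CompleteNormedModule). intros z Hz. apply cont_xinvln.
split.
- apply Rle_trans with (2 := proj1 Hz). apply Rmin_glb; lra.
- apply Rle_lt_trans with (1 := proj2 Hz). apply Rmax_lub_lt; lra.
Qed.
Lemma RInt_Lc_0a a : 0 < a < 1 ->
  RInt Lc 0 a = - RInt (fun y => / ln y) (a * a) a.
Proof.
intros Ha.
assert (H1 : is_RInt Lc 0 a (RInt (fun y => y * / ln y) 0 a - RInt (fun y => / ln y) 0 a)).
{ apply (@is_RInt_ext R_NormedModule) with (f := fun y => minus (y * / ln y) (/ ln y)).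
  - intros y Hy. rewrite Rmin_left in Hy by lra. rewrite Rmax_right in Hy by lra.
    unfold Lc. destruct (Req_EM_T y 1); [lra|]. unfold minus, plus, opp; simpl. unfold Rdiv. ring.
  - apply (@is_RInt_minus R_NormedModule).
    + apply (@RInt_correct R_CompleteNormedModule). apply ex_RInt_xinvln; lra.
    + apply (@RInt_correct R_CompleteNormedModule). apply ex_RInt_invln; lra. }
assert (H2 : RInt (fun y => y * / ln y) 0 a = RInt (fun y => / ln y) 0 (a * a)).
{ assert (Hc := @is_RInt_comp R_CompleteNormedModule (fun y => / ln y) (fun y => y * y) (fun y => 2 * y) 0 a).
  cbv beta in Hc. replace (0 * 0) with 0 in Hc by ring.
  assert (Hc1 : forall x : R, Rmin 0 a <= x <= Rmax 0 a -> continuous (fun y : R => / ln y) (x * x)).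
  { intros x Hx. rewrite Rmin_left in Hx by lra. rewrite Rmax_right in Hx by lra.
    apply cont_invln. split; nra. }
  assert (Hc2 : forall x : R, Rmin 0 a <= x <= Rmax 0 a ->
     is_derive (fun y : R => y * y) x (2 * x) /\ continuous (fun y : R => 2 * y) x).
  { intros x Hx. split.
    + auto_derive; auto. ring.
    + apply (@ex_derive_continuous R_AbsRing R_NormedModule). auto_derive. auto. }
  specialize (Hc Hc1 Hc2).
  apply (@is_RInt_unique R_CompleteNormedModule).
  apply (@is_RInt_ext R_NormedModule) with (2 := Hc).
  intros y Hy. rewrite Rmin_left in Hy by lra. rewrite Rmax_right in Hy by lra.
  rewrite ln_mult by lra. assert (ln y < 0) by (apply ln_neg; lra).
  unfold scal; simpl. unfold mult; simpl. field. lra. }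
apply (@is_RInt_unique R_CompleteNormedModule) in H1. rewrite H1, H2.
assert (Hch := @RInt_Chasles R_CompleteNormedModule (fun y => / ln y) 0 (a * a) a).
rewrite <- Hch. unfold plus; simpl. ring.
- apply ex_RInt_invln; nra.
- apply ex_RInt_invln; nra.
Qed.
Lemma is_RInt_f1 a : 0 < a < 1 ->
  is_RInt (fun v => - / (1 - v)) (a * a) a (- ln (1 + a)).
Proof.
intros Ha.
assert (E : - ln (1 + a) = minus (ln (1 - a)) (ln (1 - a * a))).
{ replace (1 - a * a) with ((1 - a) * (1 + a)) by ring.
  rewrite ln_mult by lra. unfold minus, plus, opp; simpl. ring. }
rewrite E.
apply (@is_RInt_derive R_CompleteNormedModule (fun v => ln (1 - v))).
- intros x Hx. rewrite Rmin_left in Hx by nra. rewrite Rmax_right in Hx by nra.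
  auto_derive. lra. field. lra.
- intros x Hx. rewrite Rmin_left in Hx by nra. rewrite Rmax_right in Hx by nra.
  apply (@ex_derive_continuous R_AbsRing R_NormedModule). auto_derive. lra.
Qed.

Lemma is_RInt_f2 a : 0 < a < 1 ->
  is_RInt (fun v => 1 - / (1 - v)) (a * a) a (a - a * a - ln (1 + a)).
Proof.
intros Ha.
assert (E : a - a * a - ln (1 + a) = minus (a + ln (1 - a)) (a * a + ln (1 - a * a))).
{ replace (1 - a * a) with ((1 - a) * (1 + a)) by ring.
  rewrite ln_mult by lra. unfold minus, plus, opp; simpl. ring. }
rewrite E.
apply (@is_RInt_derive R_CompleteNormedModule (fun v => v + ln (1 - v))).
- intros x Hx. rewrite Rmin_left in Hx by nra. rewrite Rmax_right in Hx by nra.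
  auto_derive. lra. field. lra.
- intros x Hx. rewrite Rmin_left in Hx by nra. rewrite Rmax_right in Hx by nra.
  apply (@ex_derive_continuous R_AbsRing R_NormedModule). auto_derive. lra.
Qed.

Lemma invln_bounds v : 0 < v < 1 -> - / (1 - v) <= / ln v <= 1 - / (1 - v).
Proof.
intros Hv.
assert (h1 := ln_ub v ltac:(lra)). assert (h2 := ln_lb v ltac:(lra)).
assert (h3 := ln_neg v Hv).
set (l := ln v) in *.
assert (hq : / l * l = 1) by (field; lra).
assert (hr : / (1 - v) * (1 - v) = 1) by (field; lra).
assert (hv : / v * v = 1) by (field; lra).
assert (/ l < 0) by (apply Rinv_lt_0_compat; lra).
assert (0 < / (1 - v)) by (apply Rinv_0_lt_compat; lra).
assert (0 < / v) by (apply Rinv_0_lt_compat; lra).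
set (q := / l) in *. set (r := / (1 - v)) in *. set (w := / v) in *.
split.
- nra.
-
  assert (l * v >= v - 1) by nra.
  nra.
Qed.

Lemma M_bounds a : 0 < a < 1 ->
  - ln (1 + a) <= RInt (fun y => / ln y) (a * a) a <= a - a * a - ln (1 + a).
Proof.
intros Ha.
assert (Haa : a * a <= a) by nra.
assert (Hex : ex_RInt (fun y => / ln y) (a * a) a) by (apply ex_RInt_invln; nra).
split.
- rewrite <- (@is_RInt_unique R_CompleteNormedModule _ _ _ _ (is_RInt_f1 a Ha)).
  apply RInt_le; auto.
  + eexists. apply is_RInt_f1; auto.
  + intros x Hx. apply invln_bounds. nra.
- rewrite <- (@is_RInt_unique R_CompleteNormedModule _ _ _ _ (is_RInt_f2 a Ha)).
  apply RInt_le; auto.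
  + eexists. apply is_RInt_f2; auto.
  + intros x Hx. apply invln_bounds. nra.
Qed.

Lemma RInt_Lc_a1 a : 0 < a < 1 -> 0 <= RInt Lc a 1 <= 1 - a.
Proof.
intros Ha.
assert (Hex : ex_RInt Lc a 1) by (apply ex_RInt_Lc; lra).
split.
- replace 0 with (RInt (fun _ => 0) a 1).
  + apply RInt_le; auto. lra. apply ex_RInt_const.
    intros x Hx. assert (h := Lc_bounds01 x ltac:(lra)). lra.
  + rewrite RInt_const. unfold scal; simpl; unfold mult; simpl. ring.
- replace (1 - a) with (RInt (fun _ => 1) a 1).
  + apply RInt_le; auto. lra. apply ex_RInt_const.
    intros x Hx. assert (h := Lc_bounds01 x ltac:(lra)). lra.
  + rewrite RInt_const. unfold scal; simpl; unfold mult; simpl. ring.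
Qed.

Lemma RInt_Lc : RInt Lc 0 1 = ln 2.
Proof.
assert (Hb : forall a, 0 < a < 1 -> Rabs (RInt Lc 0 1 - ln 2) <= 2 * (1 - a)).
{ intros a Ha.
  assert (Hch := @RInt_Chasles R_CompleteNormedModule Lc 0 a 1
     ltac:(apply ex_RInt_Lc; lra) ltac:(apply ex_RInt_Lc; lra)).
  rewrite <- Hch. unfold plus; simpl.
  rewrite RInt_Lc_0a by auto.
  assert (h1 := M_bounds a Ha). assert (h2 := RInt_Lc_a1 a Ha).
  assert (h3 : ln (1 + a) <= ln 2) by (apply ln_le; lra).
  assert (h4 : ln 2 - ln (1 + a) <= 1 - a).
  { replace 2 with ((1 + a) * (2 / (1 + a))) at 1 by (field; lra).
    rewrite ln_mult by (try apply Rdiv_lt_0_compat; lra).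
    assert (h := ln_ub (2 / (1 + a)) ltac:(apply Rdiv_lt_0_compat; lra)).
    assert (2 / (1 + a) - 1 <= 1 - a).
    { apply Rminus_le. replace (2 / (1 + a) - 1 - (1 - a)) with (- (a * (1 - a)) / (1 + a)) by (field; lra).
      apply Rmult_le_0_r. nra. left; apply Rinv_0_lt_compat; lra. }
    lra. }
  apply Rabs_le. nra. }
destruct (Req_dec (RInt Lc 0 1 - ln 2) 0) as [e|n]; [lra|].
exfalso.
set (d := Rabs (RInt Lc 0 1 - ln 2)) in *.
assert (Hd : 0 < d) by (apply Rabs_pos_lt; auto).
set (a := Rmax (1/2) (1 - d / 4)).
assert (ha1 := Rmax_l (1/2) (1 - d/4)). assert (ha2 := Rmax_r (1/2) (1 - d/4)).
assert (ha3 : a < 1). { unfold a. apply Rmax_lub_lt; lra. }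
specialize (Hb a ltac:(unfold a in *; lra)).
unfold a in *. fold d in Hb.
assert (1 - Rmax (1/2) (1 - d/4) <= d / 4) by lra.
lra.
Qed.
Definition Kf (w : C) (x : R) : C := Cinv (Cminus (RtoC 1) (Cmult (RtoC x) w)).

Lemma Q_pos a b x : ~ (b = 0 /\ 1 <= a) -> 0 <= x <= 1 -> 0 < (1 - x * a) ^ 2 + (x * b) ^ 2.
Proof.
intros Hz Hx.
destruct (Req_dec b 0) as [eb|nb].
- subst b. assert (a < 1) by (destruct (Rlt_le_dec a 1); [auto| exfalso; apply Hz; auto]).
  assert (x * a < 1) by (destruct (Rle_lt_dec a 0); nra).
  replace ((1 - x * a) ^ 2 + (x * 0) ^ 2) with ((1 - x * a) * (1 - x * a)) by ring. nra.
- destruct (Req_dec x 0) as [ex|nx].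
  + subst. replace ((1 - 0 * a) ^ 2 + (0 * b) ^ 2) with 1 by ring. lra.
  + assert (0 < (x * b) * (x * b)) by (apply Rsqr_pos_lt; apply Rmult_integral_contrapositive; auto).
    assert (0 <= (1 - x * a) ^ 2) by apply pow2_ge_0.
    replace ((x * b) ^ 2) with ((x * b) * (x * b)) by ring. lra.
Qed.

Lemma zK_re a b x : 0 < (1 - x * a) ^ 2 + (x * b) ^ 2 ->
  Re (Cmult (a, b) (Kf (a, b) x)) = (a * (1 - x * a) - x * b * b) / ((1 - x * a) ^ 2 + (x * b) ^ 2).
Proof.
intros HQ. unfold Kf, Cinv, Cminus, Cmult, Cplus, Copp, RtoC, Re; simpl.
field. match goal with |- ?e <> 0 => let h := fresh in intro h;
  assert (e = (1 - x*a)^2 + (x*b)^2) by ring; lra end.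
Qed.
Ltac Qside x a b := match goal with |- ?e <> 0 => let h := fresh in intro h;
  assert (e = (1 - x*a)^2 + (x*b)^2) by ring; lra end.

Lemma zK_im a b x : 0 < (1 - x * a) ^ 2 + (x * b) ^ 2 ->
  Im (Cmult (a, b) (Kf (a, b) x)) = b / ((1 - x * a) ^ 2 + (x * b) ^ 2).
Proof.
intros HQ. unfold Kf, Cinv, Cminus, Cmult, Cplus, Copp, RtoC, Im; simpl.
field. Qside x a b.
Qed.

Lemma Carg_alt x y : y <> 0 ->
  Carg (x, y) = (if Rlt_dec 0 y then PI / 2 else - (PI / 2)) - atan (x / y).
Proof.
intros Hy. unfold Carg, Re, Im; simpl.
destruct (Rlt_dec 0 x) as [hx|hx]; [|destruct (Rlt_dec x 0) as [hx'|hx']].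
- destruct (Rlt_dec 0 y) as [hy|hy].
  + assert (y / x = / (x / y)) by (field; lra). rewrite H.
    rewrite atan_inv by (apply Rdiv_lt_0_compat; lra). lra.
  + assert (y < 0) by lra.
    assert (y / x = - / (- x / y)) by (field; lra). rewrite H0.
    rewrite atan_opp, atan_inv.
    * replace (- x / y) with (- (x / y)) by (field; lra). rewrite atan_opp. lra.
    * replace (- x / y) with (x / (- y)) by (field; lra). apply Rdiv_lt_0_compat; lra.
- destruct (Rle_dec 0 y) as [hy|hy]; destruct (Rlt_dec 0 y) as [hy'|hy']; try lra.
  + assert (y / x = - / (- x / y)) by (field; lra). rewrite H.
    rewrite atan_opp, atan_inv.
    * replace (- x / y) with (- (x / y)) by (field; lra). rewrite atan_opp. lra.
    * apply Rdiv_lt_0_compat; lra.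
  + assert (y < 0) by lra.
    assert (y / x = / (x / y)) by (field; lra). rewrite H0.
    rewrite atan_inv.
    * lra.
    * replace (x / y) with ((- x) / (- y)) by (field; lra). apply Rdiv_lt_0_compat; lra.
- assert (x = 0) by lra. subst x. unfold Rdiv. rewrite Rmult_0_l, atan_0.
  destruct (Rlt_dec 0 y) as [hy|hy]; [lra|].
  destruct (Rlt_dec y 0) as [hy'|hy']; lra.
Qed.
Lemma ln_sqrt' y : 0 < y -> ln (sqrt y) = ln y / 2.
Proof.
intros Hy. assert (Hs : 0 < sqrt y) by (apply sqrt_lt_R0; auto).
rewrite <- (sqrt_sqrt y) at 2 by lra. rewrite ln_mult by auto. field.
Qed.

Lemma re_int a b : ~ (b = 0 /\ 1 <= a) ->
  is_RInt (fun x => (a * (1 - x * a) - x * b * b) / ((1 - x * a) ^ 2 + (x * b) ^ 2)) 0 1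
    (- ln (Cmod (Cminus (RtoC 1) (a, b)))).
Proof.
intros Hz.
assert (HQ := fun x => Q_pos a b x Hz).
assert (E : - ln (Cmod (Cminus (RtoC 1) (a, b))) =
  minus (- / 2 * ln ((1 - 1 * a) ^ 2 + (1 * b) ^ 2)) (- / 2 * ln ((1 - 0 * a) ^ 2 + (0 * b) ^ 2))).
{ replace ((1 - 0 * a) ^ 2 + (0 * b) ^ 2) with 1 by ring. rewrite ln_1.
  replace (Cmod (Cminus (RtoC 1) (a, b))) with (sqrt ((1 - 1 * a) ^ 2 + (1 * b) ^ 2)).
  2:{ unfold Cmod, Cminus, Cplus, Copp, RtoC; simpl. f_equal. ring. }
  rewrite ln_sqrt' by (apply HQ; lra). unfold minus, plus, opp; simpl. field. }
rewrite E.
apply (@is_RInt_derive R_CompleteNormedModule (fun x => - / 2 * ln ((1 - x * a) ^ 2 + (x * b) ^ 2))).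
- intros x Hx. rewrite Rmin_left in Hx by lra. rewrite Rmax_right in Hx by lra.
  specialize (HQ x Hx).
  auto_derive. auto. field. lra.
- intros x Hx. rewrite Rmin_left in Hx by lra. rewrite Rmax_right in Hx by lra.
  specialize (HQ x Hx).
  apply (@ex_derive_continuous R_AbsRing R_NormedModule). auto_derive. lra.
Qed.
Lemma F1_deriv a b x : 1 - x * a <> 0 ->
  is_derive (fun x => atan (x * b / (1 - x * a))) x (b / ((1 - x * a) ^ 2 + (x * b) ^ 2)).
Proof.
intros H. auto_derive. auto.
replace (1 + - (x * a)) with (1 - x * a) by ring.
assert (Hu : 0 < (1 - x * a) * (1 - x * a)) by (apply Rsqr_pos_lt; auto).
assert (Hv : 0 <= (x * b) * (x * b)) by apply Rle_0_sqr.
field. split; auto.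
intro h. replace ((1 - x*a)^2 + (x*b)^2) with ((1 - x * a) * (1 - x * a) + (x * b) * (x * b)) in h by ring. lra.
Qed.
Lemma H_deriv a b x : x <> 0 -> b <> 0 ->
  is_derive (fun x => - atan ((1 - x * a) / (x * b))) x (b / ((1 - x * a) ^ 2 + (x * b) ^ 2)).
Proof.
intros Hx Hb. auto_derive. apply Rmult_integral_contrapositive; auto.
assert (Hu : 0 < (x * b) * (x * b)) by (apply Rsqr_pos_lt; apply Rmult_integral_contrapositive; auto).
assert (Hv : 0 <= (1 - x * a) * (1 - x * a)) by apply Rle_0_sqr.
field. repeat split; auto.
intro h. replace ((1 - x*a)^2 + (x*b)^2) with ((1 - x * a) * (1 - x * a) + (x * b) * (x * b)) in h by ring. lra.
Qed.

Lemma bQ_cont a b x : ~ (b = 0 /\ 1 <= a) -> 0 <= x <= 1 ->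
  continuous (fun x => b / ((1 - x * a) ^ 2 + (x * b) ^ 2)) x.
Proof.
intros Hz Hx. assert (HQ := Q_pos a b x Hz Hx).
apply (@ex_derive_continuous R_AbsRing R_NormedModule). auto_derive. lra.
Qed.

Lemma im_int a b : ~ (b = 0 /\ 1 <= a) ->
  is_RInt (fun x => b / ((1 - x * a) ^ 2 + (x * b) ^ 2)) 0 1
    (- Carg (Cminus (RtoC 1) (a, b))).
Proof.
intros Hz.
replace (Cminus (RtoC 1) (a, b)) with (1 - a, - b)
  by (unfold Cminus, Cplus, Copp, RtoC; simpl; f_equal; ring).
destruct (Rlt_le_dec a 1) as [ha|ha].
-
  assert (E : - Carg (1 - a, - b) = minus (atan (1 * b / (1 - 1 * a))) (atan (0 * b / (1 - 0 * a)))).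
  { unfold Carg, Re, Im; simpl. destruct (Rlt_dec 0 (1 - a)) as [h|h]; [|lra].
    replace (0 * b / (1 - 0 * a)) with 0 by (field; lra). rewrite atan_0.
    replace (- b / (1 - a)) with (- (1 * b / (1 - 1 * a))) by (field; lra).
    rewrite atan_opp. unfold minus, plus, opp; simpl. ring. }
  rewrite E.
  apply (@is_RInt_derive R_CompleteNormedModule (fun x => atan (x * b / (1 - x * a)))).
  + intros x Hx. rewrite Rmin_left in Hx by lra. rewrite Rmax_right in Hx by lra.
    apply F1_deriv. destruct (Rle_lt_dec a 0); nra.
  + intros x Hx. rewrite Rmin_left in Hx by lra. rewrite Rmax_right in Hx by lra.
    apply bQ_cont; auto.
- assert (hb : b <> 0) by (intro e; apply Hz; auto).
  set (x1 := / (2 * a)).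
  assert (hx1 : 0 < x1 <= 1 / 2).
  { unfold x1. split. apply Rinv_0_lt_compat; lra.
    replace (1/2) with (/ 2) by field. apply Rinv_le_contravar; lra. }
  assert (hx1a : 1 - x1 * a = 1 / 2) by (unfold x1; field; lra).
  assert (I1 : is_RInt (fun x => b / ((1 - x * a) ^ 2 + (x * b) ^ 2)) 0 x1 (atan (b / a))).
  { replace (atan (b / a)) with (minus (atan (x1 * b / (1 - x1 * a))) (atan (0 * b / (1 - 0 * a)))).
    2:{ rewrite hx1a. replace (0 * b / (1 - 0 * a)) with 0 by field. rewrite atan_0.
        replace (x1 * b / (1 / 2)) with (b / a) by (unfold x1; field; lra).
        unfold minus, plus, opp; simpl. ring. }
    apply (@is_RInt_derive R_CompleteNormedModule (fun x => atan (x * b / (1 - x * a)))).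
    + intros x Hx. rewrite Rmin_left in Hx by lra. rewrite Rmax_right in Hx by lra.
      apply F1_deriv. assert (x * a <= x1 * a) by nra. lra.
    + intros x Hx. rewrite Rmin_left in Hx by lra. rewrite Rmax_right in Hx by lra.
      apply bQ_cont; auto. lra. }
  assert (I2 : is_RInt (fun x => b / ((1 - x * a) ^ 2 + (x * b) ^ 2)) x1 1
                 (atan (a / b) - atan ((1 - a) / b))).
  { replace (atan (a / b) - atan ((1 - a) / b)) with
      (minus (- atan ((1 - 1 * a) / (1 * b))) (- atan ((1 - x1 * a) / (x1 * b)))).
    2:{ rewrite hx1a. replace ((1 / 2) / (x1 * b)) with (a / b) by (unfold x1; field; lra).
        replace ((1 - 1 * a) / (1 * b)) with ((1 - a) / b) by (field; lra).
        unfold minus, plus, opp; simpl. ring. }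
    apply (@is_RInt_derive R_CompleteNormedModule (fun x => - atan ((1 - x * a) / (x * b)))).
    + intros x Hx. rewrite Rmin_left in Hx by lra. rewrite Rmax_right in Hx by lra.
      apply H_deriv; auto. lra.
    + intros x Hx. rewrite Rmin_left in Hx by lra. rewrite Rmax_right in Hx by lra.
      apply bQ_cont; auto. lra. }
  assert (I := @is_RInt_Chasles R_NormedModule _ 0 x1 1 _ _ I1 I2).
  replace (- Carg (1 - a, - b)) with (plus (atan (b / a)) (atan (a / b) - atan ((1 - a) / b))); auto.
  rewrite Carg_alt by (intro e; apply hb; lra).
  replace ((1 - a) / - b) with (- ((1 - a) / b)) by (field; auto).
  rewrite atan_opp. unfold plus; simpl.
  destruct (Rlt_dec 0 (- b)) as [hb'|hb'].
  +
    replace (b / a) with (- (- b / a)) by (field; lra).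
    replace (a / b) with (- / (- b / a)) by (field; lra).
    rewrite !atan_opp, atan_inv by (apply Rdiv_lt_0_compat; lra). lra.
  + assert (0 < b) by (destruct (Rtotal_order b 0) as [?|[?|?]]; [lra|congruence|lra]).
    replace (a / b) with (/ (b / a)) by (field; lra).
    rewrite atan_inv by (apply Rdiv_lt_0_compat; lra). lra.
Qed.
Lemma is_RInt_C (f : R -> C) a b (l : C) :
  is_RInt (fun t => Re (f t)) a b (Re l) -> is_RInt (fun t => Im (f t)) a b (Im l) ->
  @is_RInt C_R_CompleteNormedModule f a b l.
Proof.
intros H1 H2. destruct l as [l1 l2].
exact (@is_RInt_fct_extend_pair R_NormedModule R_NormedModule f a b l1 l2 H1 H2).
Qed.

Lemma is_RInt_C_re (f : R -> C) a b (l : C) :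
  @is_RInt C_R_CompleteNormedModule f a b l -> is_RInt (fun t => Re (f t)) a b (Re l).
Proof.
intros H. exact (@is_RInt_fct_extend_fst R_NormedModule R_NormedModule f a b l H).
Qed.
Lemma is_RInt_C_im (f : R -> C) a b (l : C) :
  @is_RInt C_R_CompleteNormedModule f a b l -> is_RInt (fun t => Im (f t)) a b (Im l).
Proof.
intros H. exact (@is_RInt_fct_extend_snd R_NormedModule R_NormedModule f a b l H).
Qed.

Lemma C_cont (f : R -> C) x : continuous (fun t => Re (f t)) x -> continuous (fun t => Im (f t)) x ->
  @continuous R_UniformSpace C_UniformSpace f x.
Proof.
intros H1 H2.
apply filterlim_locally. intros eps.
apply filterlim_locally with (eps := eps) in H1.
apply filterlim_locally with (eps := eps) in H2.
generalize (filter_and _ _ H1 H2). apply filter_imp. intros t [h1 h2]. split; assumption.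
Qed.

Lemma is_RInt_Cplus (f g : R -> C) a b l1 l2 :
  @is_RInt C_R_CompleteNormedModule f a b l1 -> @is_RInt C_R_CompleteNormedModule g a b l2 ->
  @is_RInt C_R_CompleteNormedModule (fun x => Cplus (f x) (g x)) a b (Cplus l1 l2).
Proof.
intros Hf Hg. apply is_RInt_C.
- apply (@is_RInt_ext R_NormedModule) with (f := fun x => plus (Re (f x)) (Re (g x))).
  + intros; reflexivity.
  + exact (@is_RInt_plus R_NormedModule _ _ a b _ _ (is_RInt_C_re _ _ _ _ Hf) (is_RInt_C_re _ _ _ _ Hg)).
- apply (@is_RInt_ext R_NormedModule) with (f := fun x => plus (Im (f x)) (Im (g x))).
  + intros; reflexivity.
  + exact (@is_RInt_plus R_NormedModule _ _ a b _ _ (is_RInt_C_im _ _ _ _ Hf) (is_RInt_C_im _ _ _ _ Hg)).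
Qed.

Lemma is_RInt_Cminus (f g : R -> C) a b l1 l2 :
  @is_RInt C_R_CompleteNormedModule f a b l1 -> @is_RInt C_R_CompleteNormedModule g a b l2 ->
  @is_RInt C_R_CompleteNormedModule (fun x => Cminus (f x) (g x)) a b (Cminus l1 l2).
Proof.
intros Hf Hg. apply is_RInt_C.
- apply (@is_RInt_ext R_NormedModule) with (f := fun x => minus (Re (f x)) (Re (g x))).
  + intros; reflexivity.
  + exact (@is_RInt_minus R_NormedModule _ _ a b _ _ (is_RInt_C_re _ _ _ _ Hf) (is_RInt_C_re _ _ _ _ Hg)).
- apply (@is_RInt_ext R_NormedModule) with (f := fun x => minus (Im (f x)) (Im (g x))).
  + intros; reflexivity.
  + exact (@is_RInt_minus R_NormedModule _ _ a b _ _ (is_RInt_C_im _ _ _ _ Hf) (is_RInt_C_im _ _ _ _ Hg)).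
Qed.

Lemma is_RInt_Cmult_l (c : C) (f : R -> C) a b l :
  @is_RInt C_R_CompleteNormedModule f a b l ->
  @is_RInt C_R_CompleteNormedModule (fun x => Cmult c (f x)) a b (Cmult c l).
Proof.
intros Hf. destruct c as [cr ci].
assert (Hr := is_RInt_C_re _ _ _ _ Hf). assert (Hi := is_RInt_C_im _ _ _ _ Hf).
apply is_RInt_C.
- apply (@is_RInt_ext R_NormedModule) with (f := fun x => minus (scal cr (Re (f x))) (scal ci (Im (f x)))).
  + intros; reflexivity.
  + exact (@is_RInt_minus R_NormedModule _ _ a b _ _ (@is_RInt_scal R_NormedModule _ a b cr _ Hr) (@is_RInt_scal R_NormedModule _ a b ci _ Hi)).
- apply (@is_RInt_ext R_NormedModule) with (f := fun x => plus (scal cr (Im (f x))) (scal ci (Re (f x)))).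
  + intros; reflexivity.
  + exact (@is_RInt_plus R_NormedModule _ _ a b _ _ (@is_RInt_scal R_NormedModule _ a b cr _ Hi) (@is_RInt_scal R_NormedModule _ a b ci _ Hr)).
Qed.

Lemma is_RInt_RtoC (f : R -> R) a b l :
  is_RInt f a b l -> @is_RInt C_R_CompleteNormedModule (fun x => RtoC (f x)) a b (RtoC l).
Proof.
intros Hf. apply is_RInt_C.
- exact Hf.
- simpl. assert (H := @is_RInt_const R_NormedModule a b 0).
  unfold scal in H; simpl in H; unfold mult in H; simpl in H; rewrite Rmult_0_r in H.
  exact H.
Qed.
Lemma zK_int a b : ~ (b = 0 /\ 1 <= a) ->
  @is_RInt C_R_CompleteNormedModule (fun x => Cmult (a, b) (Kf (a, b) x)) 0 1
    (Copp (Clog (Cminus (RtoC 1) (a, b)))).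
Proof.
intros Hz. apply is_RInt_C.
- apply (@is_RInt_ext R_NormedModule) with
    (f := fun x => (a * (1 - x * a) - x * b * b) / ((1 - x * a) ^ 2 + (x * b) ^ 2)).
  + intros x Hx. rewrite Rmin_left in Hx by lra. rewrite Rmax_right in Hx by lra.
    rewrite zK_re; auto. apply Q_pos; auto; lra.
  + exact (re_int a b Hz).
- apply (@is_RInt_ext R_NormedModule) with
    (f := fun x => b / ((1 - x * a) ^ 2 + (x * b) ^ 2)).
  + intros x Hx. rewrite Rmin_left in Hx by lra. rewrite Rmax_right in Hx by lra.
    rewrite zK_im; auto. apply Q_pos; auto; lra.
  + exact (im_int a b Hz).
Qed.

Lemma Kf_eq p q x : Kf (p, q) x =
  ((1 - x * p) / ((1 - x * p) ^ 2 + (x * q) ^ 2), (x * q) / ((1 - x * p) ^ 2 + (x * q) ^ 2)).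
Proof.
unfold Kf, Cinv, Cminus, Cplus, Copp, Cmult, RtoC; simpl.
f_equal; unfold Rdiv; f_equal; try ring; f_equal; ring.
Qed.

Definition gw (w : C) (x : R) : C := Cmult (RtoC (1 - Lc x)) (Kf w x).

Lemma gw_cont p q x : 0 <= x <= 1 -> 0 < (1 - x * p) ^ 2 + (x * q) ^ 2 ->
  @continuous R_UniformSpace C_UniformSpace (gw (p, q)) x.
Proof.
intros Hx HQ. apply C_cont.
- apply (@continuous_ext R_UniformSpace R_UniformSpace)
    with (f := fun t => mult (plus 1 (opp (Lc t))) ((1 - t * p) / ((1 - t * p) ^ 2 + (t * q) ^ 2))).
  + intros t. unfold gw. rewrite Kf_eq. unfold plus, opp, mult; simpl. ring.
  + apply (@continuous_mult R_UniformSpace R_AbsRing).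
    * apply (@continuous_plus R_UniformSpace R_AbsRing R_NormedModule).
      apply continuous_const.
      apply (@continuous_opp R_UniformSpace R_AbsRing R_NormedModule). apply Lc_cont; auto.
    * apply (@ex_derive_continuous R_AbsRing R_NormedModule). auto_derive. lra.
- apply (@continuous_ext R_UniformSpace R_UniformSpace)
    with (f := fun t => mult (plus 1 (opp (Lc t))) ((t * q) / ((1 - t * p) ^ 2 + (t * q) ^ 2))).
  + intros t. unfold gw. rewrite Kf_eq. unfold plus, opp, mult; simpl. ring.
  + apply (@continuous_mult R_UniformSpace R_AbsRing).
    * apply (@continuous_plus R_UniformSpace R_AbsRing R_NormedModule).
      apply continuous_const.
      apply (@continuous_opp R_UniformSpace R_AbsRing R_NormedModule). apply Lc_cont; auto.
    * apply (@ex_derive_continuous R_AbsRing R_NormedModule). auto_derive. lra.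
Qed.

Lemma gw_ex p q : ~ (q = 0 /\ 1 <= p) -> @ex_RInt C_R_CompleteNormedModule (gw (p, q)) 0 1.
Proof.
intros Hz. apply (@ex_RInt_continuous C_R_CompleteNormedModule).
intros x Hx. rewrite Rmin_left in Hx by lra. rewrite Rmax_right in Hx by lra.
apply gw_cont; auto. apply Q_pos; auto.
Qed.
Lemma Lc_sq x : 0 < x < 1 -> Lc (x * x) = Lc x * (1 + x) / 2.
Proof.
intros Hx. unfold Lc.
destruct (Req_EM_T (x * x) 1) as [e|n]; [nra|].
destruct (Req_EM_T x 1) as [e|n']; [lra|].
rewrite ln_mult by lra. assert (ln x < 0) by (apply ln_neg; lra). field. lra.
Qed.

Lemma one_minus_nz w x : ~ (Im w = 0 /\ 1 <= Re w) -> 0 <= x <= 1 ->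
  Cminus (RtoC 1) (Cmult (RtoC x) w) <> RtoC 0.
Proof.
destruct w as [p q]. simpl. intros Hz Hx h.
assert (HQ := Q_pos p q x Hz Hx).
assert (h1 := f_equal fst h). assert (h2 := f_equal snd h). simpl in h1, h2.
assert ((1 - x * p) ^ 2 + (x * q) ^ 2 = 0).
{ replace (1 - x * p) with (1 + - (x * p - 0 * q)) by ring.
  replace (x * q) with (- (0 + - (x * q + 0 * p))) by ring.
  rewrite h1, h2. ring. }
lra.
Qed.

Lemma gw_ex' w : ~ (Im w = 0 /\ 1 <= Re w) -> @ex_RInt C_R_CompleteNormedModule (gw w) 0 1.
Proof. destruct w as [p q]. apply gw_ex. Qed.

Lemma gw_cont' w x : ~ (Im w = 0 /\ 1 <= Re w) -> 0 <= x <= 1 ->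
  @continuous R_UniformSpace C_UniformSpace (gw w) x.
Proof. destruct w as [p q]. simpl. intros. apply gw_cont; auto. apply Q_pos; auto. Qed.

Lemma zK_int' w : ~ (Im w = 0 /\ 1 <= Re w) ->
  @is_RInt C_R_CompleteNormedModule (fun x => Cmult w (Kf w x)) 0 1
    (Copp (Clog (Cminus (RtoC 1) w))).
Proof. destruct w as [p q]. apply zK_int. Qed.

Lemma gammaE_gw w : gammaE w = @RInt C_R_CompleteNormedModule (gw w) 0 1.
Proof.
unfold gammaE. apply (@RInt_ext C_R_CompleteNormedModule).
intros x Hx. rewrite Rmin_left in Hx by lra. rewrite Rmax_right in Hx by lra.
unfold gw, Kf. f_equal. f_equal. unfold Lc.
destruct (Req_EM_T x 1); [lra|]. assert (ln x < 0) by (apply ln_neg; lra). field. lra.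
Qed.
Theorem theorem15 (z : C) :
  ~ (Im z = 0 /\ (Re z <= -1 \/ 1 <= Re z)) ->
  Cplus (Cmult (Cmult z (Cplus (RtoC 1) z)) (gammaE z))
        (Cmult (Cmult z (Cminus (RtoC 1) z)) (gammaE (Copp z)))
  = Cplus (Cplus (Cminus (Cmult (Cmult (RtoC 2) (Cmult z (Cmult z z))) (gammaE (Cmult z z)))
                         (Cmult (Cmult (RtoC 2) z) (RtoC (ln 2))))
                 (Cmult (Cplus (RtoC 1) z) (Clog (Cplus (RtoC 1) z))))
          (Copp (Cmult (Cminus (RtoC 1) z) (Clog (Cminus (RtoC 1) z)))).
Proof.
intros H.
assert (H1 : ~ (Im z = 0 /\ 1 <= Re z)) by tauto.
assert (H2 : ~ (Im (Copp z) = 0 /\ 1 <= Re (Copp z))).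
{ destruct z as [a b]; simpl in *. intros [h1 h2]. apply H. split; lra. }
assert (H3 : ~ (Im (Cmult z z) = 0 /\ 1 <= Re (Cmult z z))).
{ destruct z as [a b]; simpl in *. intros [h1 h2]. apply H.
  assert (hab : a * b = 0) by lra.
  destruct (Rmult_integral _ _ hab) as [ha|hb].
  - subst. nra.
  - subst. split; auto. nra. }
rewrite !gammaE_gw.
set (G1 := @RInt C_R_CompleteNormedModule (gw z) 0 1).
set (G2 := @RInt C_R_CompleteNormedModule (gw (Copp z)) 0 1).
set (G3 := @RInt C_R_CompleteNormedModule (gw (Cmult z z)) 0 1).
assert (I1 : @is_RInt C_R_CompleteNormedModule (gw z) 0 1 G1)
  by (apply (@RInt_correct C_R_CompleteNormedModule); apply gw_ex'; auto).
assert (I2 : @is_RInt C_R_CompleteNormedModule (gw (Copp z)) 0 1 G2)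
  by (apply (@RInt_correct C_R_CompleteNormedModule); apply gw_ex'; auto).
assert (I3 : @is_RInt C_R_CompleteNormedModule
   (fun y => scal (2 * y) (gw (Cmult z z) (y * y))) 0 1 G3).
{ assert (Hc := @is_RInt_comp C_R_CompleteNormedModule (gw (Cmult z z)) (fun y => y * y) (fun y => 2 * y) 0 1).
  cbv beta in Hc. replace (0 * 0) with 0 in Hc by ring. replace (1 * 1) with 1 in Hc by ring.
  apply Hc.
  - intros x Hx. rewrite Rmin_left in Hx by lra. rewrite Rmax_right in Hx by lra.
    apply gw_cont'; auto. nra.
  - intros x Hx. split.
    + auto_derive; auto. ring.
    + apply (@ex_derive_continuous R_AbsRing R_NormedModule). auto_derive. auto. }
set (c1 := Cmult z (Cplus (RtoC 1) z)).
set (c2 := Cmult z (Cminus (RtoC 1) z)).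
set (c3 := Cmult (RtoC 2) (Cmult z (Cmult z z))).
assert (ILc : @is_RInt C_R_CompleteNormedModule (fun x => RtoC (Lc x)) 0 1 (RtoC (ln 2))).
{ apply is_RInt_RtoC. rewrite <- RInt_Lc. apply (@RInt_correct R_CompleteNormedModule).
  apply ex_RInt_Lc; lra. }
assert (IA := is_RInt_Cminus _ _ _ _ _ _
  (is_RInt_Cplus _ _ _ _ _ _ (is_RInt_Cmult_l c1 _ _ _ _ I1) (is_RInt_Cmult_l c2 _ _ _ _ I2))
  (is_RInt_Cmult_l c3 _ _ _ _ I3)).
assert (IB := is_RInt_Cminus _ _ _ _ _ _
  (is_RInt_Cplus _ _ _ _ _ _ (is_RInt_Cmult_l (Cminus (RtoC 1) z) _ _ _ _ (zK_int' z H1))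
      (is_RInt_Cmult_l (Copp (Cplus (RtoC 1) z)) _ _ _ _ (zK_int' (Copp z) H2)))
  (is_RInt_Cmult_l (Cmult (RtoC 2) z) _ _ _ _ ILc)).
assert (E : Cminus (Cplus (Cmult c1 G1) (Cmult c2 G2)) (Cmult c3 G3) =
  Cminus (Cplus (Cmult (Cminus (RtoC 1) z) (Copp (Clog (Cminus (RtoC 1) z))))
                (Cmult (Copp (Cplus (RtoC 1) z)) (Copp (Clog (Cminus (RtoC 1) (Copp z))))))
         (Cmult (Cmult (RtoC 2) z) (RtoC (ln 2)))).
{ apply (@is_RInt_unique C_R_CompleteNormedModule) in IA. rewrite <- IA.
  apply (@is_RInt_unique C_R_CompleteNormedModule).
  eapply (@is_RInt_ext C_R_CompleteNormedModule); [|exact IB].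
  intros x Hx. rewrite Rmin_left in Hx by lra. rewrite Rmax_right in Hx by lra.
  cbv beta. unfold gw, Kf, c1, c2, c3. rewrite scal_R_Cmult. rewrite Lc_sq by lra.
  assert (n1 := one_minus_nz z x H1 ltac:(lra)).
  assert (n2 := one_minus_nz (Copp z) x H2 ltac:(lra)).
  assert (n3 := one_minus_nz (Cmult z z) (x * x) H3 ltac:(nra)).
  assert (n4 : RtoC 2 <> RtoC 0).
  { intro h. apply (f_equal Re) in h. simpl in h. lra. }
  unfold Kf in *.
  rewrite RtoC_mult in n3.
  rewrite !RtoC_minus, RtoC_div by lra. rewrite !RtoC_mult, RtoC_plus.
  match goal with |- ?A = ?B => change (@eq C A B) end. field. auto. }

replace (Cminus (RtoC 1) (Copp z)) with (Cplus (RtoC 1) z) in E by ring.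
set (l1 := Clog (Cminus (RtoC 1) z)) in *.
set (l2 := Clog (Cplus (RtoC 1) z)) in *.
set (L2 := RtoC (ln 2)) in *.
fold c1 c2 c3.
assert (E' : Cplus (Cmult c1 G1) (Cmult c2 G2) = Cplus (Cmult c3 G3) (Cminus (Cplus (Cmult (Cminus (RtoC 1) z) (Copp l1))
                (Cmult (Copp (Cplus (RtoC 1) z)) (Copp l2))) (Cmult (Cmult (RtoC 2) z) L2))).
{ rewrite <- E. ring. }
rewrite E'. ring.
Qed.
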